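(* Let $\widetilde{C}_4$ be the infinite graph with vertex set $\{0,u,0',d\}\cup\{1,2,3,\dots\}\cup\{-1,-2,-3,\dots\}$ and edge set $\{\{0,u\},\{u,0'\},\{0',d\},\{d,0\}\}\cup\{\{n,n+1\}:n\ge1\}\cup\{\{-n,-n-1\}:n\ge1\}\cup\{\{0',-1\},\{0,1\}\}$. Let $U$ be the Grover walk operator on $\ell^2(A(\widetilde{C}_4))$, let $\Psi_0\in\ell^2(A(\widetilde{C}_4))$ with $\|\Psi_0\|=1$, let $\Psi_t=U^t\Psi_0$, and let $X_t$ be the $\mathbb{Z}$-valued random variable with $\mathbb{P}(X_t=j)=\sum_{v\in V_j}\mu_t(v)$, where $V_j=\{j\}$ for $j\neq0$ and $V_0=\{0,u,0',d\}$. Let $c=((0',u),(u,0),(0,d),(d,0'))$ and let $\bar c=((0',d),(d,0),(0,u),(u,0'))$ be the reversed cycle. For $m\in\{1,2,3,4\}$ put $\Gamma_m=\mathrm{span}\{w^{(m)}(c)-w^{(m)}(\bar c)\}$, and let $\Gamma=\Gamma_1+\Gamma_2+\Gamma_3+\Gamma_4$. Then localization occurs for the sequence of distributions of $X_t$ (that is, there is an integer $j$ with $\limsup_{t\to\infty}\mathbb{P}(X_t=j)>0$) if and only if $\Psi_0\notin\Gamma^{\perp}$.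
   Context: $A(G)=\{(u,v):\{u,v\}\in E(G)\}$ is the set of arcs of $G$; for $e=(u,v)$ write $o(e)=u$, $t(e)=v$ and $\bar e=(v,u)$. The Hilbert space $\ell^2(A(G))$ has the standard basis $\{\delta_e\}_{e\in A(G)}$. The Grover walk operator $U$ on $\ell^2(A(G))$ is defined by $$\langle\delta_f,U\delta_e\rangle=\Big(\tfrac{2}{\deg o(e)}-\delta_{e,\bar f}\Big)\mathbf 1_{\{o(e)=t(f)\}}.$$ The distribution at time $t$ is $\mu_t(v)=\sum_{e:\,o(e)=v}|\Psi_t(e)|^2$. For a path $p=(e_1,\dots,e_n)$ and $m\in\mathbb{N}$, set $w^{(m)}(p)=\sum_{j=1}^n e^{2\pi i m j/n}\delta_{e_j}$; here $n=4$. Localization of a sequence of distributions $\rho_t$ on $\mathbb{Z}$ means that there exists an integer $j$ with $\limsup_{t\to\infty}\rho_t(j)>0$. *)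

(* Defs.v *)
From HB Require Import structures.
From mathcomp Require Import all_boot all_order all_algebra.
From mathcomp Require Import complex.
From mathcomp Require Import boolp classical_sets fsbigop reals constructive_ereal
  ereal topology sequences esum.

Set Implicit Arguments.
Unset Strict Implicit.
Unset Printing Implicit Defensive.

Import Order.TTheory GRing.Theory Num.Theory.
Local Open Scope ring_scope.
Local Open Scope classical_set_scope.

(** * The graph  C~_4
   Vertices: [inl n] is the integer vertex n (inl 0 is the vertex 0);
   [inr 0] = u, [inr 1] = 0', [inr 2] = d. *)
Definition vtx : Type := (int + 'I_3)%type.

Definition v0 : vtx := inl 0%Z.
Definition vu : vtx := inr (@Ordinal 3 0 isT).
Definition v0' : vtx := inr (@Ordinal 3 1 isT).
Definition vd : vtx := inr (@Ordinal 3 2 isT).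
Definition vint (n : int) : vtx := inl n.

(** The listed (unordered) edges, each given in one orientation. *)
Definition edge_listed (x y : vtx) : bool :=
  [|| (x == v0) && (y == vu), (x == vu) && (y == v0'),
      (x == v0') && (y == vd), (x == vd) && (y == v0),
      (x == v0') && (y == vint (-1)), (x == v0) && (y == vint 1)
    | match x, y with
      | inl a, inl b => ((1 <= a)%R && (b == a + 1)) || ((a <= -1)%R && (b == a - 1))
      | _, _ => false
      end ].

Definition adj (x y : vtx) : bool := edge_listed x y || edge_listed y x.

Definition arc : Type := {p : vtx * vtx | adj p.1 p.2}.

Definition o (e : arc) : vtx := (val e).1.
Definition t (e : arc) : vtx := (val e).2.

Definition deg (v : vtx) : nat := \big[addn/0%N]_(w \in [set w | adj v w]) 1%N.

Section Walk.
Variable R : realType.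
Local Notation C := R[i].
Local Open Scope complex_scope.

Definition sqabs (z : C) : R := complex.Re z ^+ 2 + complex.Im z ^+ 2.

Definition state := arc -> C.

(** Grover walk:  <delta_f, U delta_e> = (2/deg o(e) - [e = rev f]) 1{o(e) = t(f)},
    hence (U Psi)(f) = sum_{e : o(e) = t(f)} (2/deg o(e) - [e = rev f]) Psi(e)
    (a finite sum since the graph is locally finite). *)
Definition grover (Psi : state) : state := fun f =>
  \sum_(e \in [set e : arc | o e = t f])
     ((2%:R / (deg (o e))%:R) - ((val e == (t f, o f)) : bool)%:R) * Psi e.

Definition Psi_t (Psi0 : state) (n : nat) : state := iter n grover Psi0.

Definition mu (Psi0 : state) (n : nat) (v : vtx) : R :=
  \sum_(e \in [set e : arc | o e = v]) sqabs (Psi_t Psi0 n e).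

Definition Vset (j : int) : set vtx :=
  if j == 0 then [set v0; vu; v0'; vd] else [set vint j].

Definition probX (Psi0 : state) (n : nat) (j : int) : R :=
  \sum_(v \in Vset j) mu Psi0 n v.

Definition sqnorm (Psi : state) : \bar R :=
  \esum_(e in [set: arc]) (sqabs (Psi e))%:E.

(** inner product <gamma, Psi> for a finitely supported gamma *)
Definition inner_fin (gamma Psi : state) : C :=
  \sum_(e \in [set: arc]) (gamma e)^* * Psi e.

(** w^(m)(p) for a path p = (e_1,...,e_4) of length n = 4:
    sum_j exp(2 pi i m j / 4) delta_{e_j} = sum_j i^(m j) delta_{e_j} *)
Definition wm (m : nat) (p : 4.-tuple arc) : state := fun e =>
  \sum_(j < 4) ('i ^+ (m * j.+1)) * ((e == tnth p j) : bool)%:R.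

End Walk.

Definition mkarc (x y : vtx) (h : adj x y) : arc := exist _ (x, y) h.

Definition c_cycle : 4.-tuple arc :=
  [tuple @mkarc v0' vu isT; @mkarc vu v0 isT; @mkarc v0 vd isT; @mkarc vd v0' isT].
Definition cbar_cycle : 4.-tuple arc :=
  [tuple @mkarc v0' vd isT; @mkarc vd v0 isT; @mkarc v0 vu isT; @mkarc vu v0' isT].

Section Gamma.
Variable R : realType.
Local Open Scope complex_scope.

Definition gam (m : nat) : state R := fun e => wm R m c_cycle e - wm R m cbar_cycle e.

Definition inGamma (gamma : state R) : Prop :=
  exists a : 'I_4 -> R[i], gamma = fun e => \sum_(m < 4) a m * gam m.+1 e.

Definition inGamma_perp (Psi : state R) : Prop :=
  forall gamma, inGamma gamma -> inner_fin gamma Psi = 0.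

Definition localization (Psi0 : state R) : Prop :=
  exists j : int, (0 < limn_esup (fun n => (probX Psi0 n j)%:E))%E.
End Gamma.

(* Main.v *)
Require Import Defs.
From HB Require Import structures.
From mathcomp Require Import all_boot all_order all_algebra.
From mathcomp Require Import complex.
From mathcomp Require Import boolp classical_sets fsbigop reals constructive_ereal
  ereal topology sequences esum.
From mathcomp Require Import ring lra.
Set Implicit Arguments.
Unset Strict Implicit.
Unset Printing Implicit Defensive.
Import Order.TTheory GRing.Theory Num.Theory.
Local Open Scope ring_scope.
Local Open Scope classical_set_scope.
From mathcomp Require Import zify normedtype.
Import numFieldNormedType.Exports.
Definition nb (x : vtx) : seq vtx :=
  match x with
  | inl (Posz 0) => [:: vu; vd; inl (Posz 1)]
  | inl (Posz k.+1) => [:: inl (Posz k.+2); inl (Posz k)]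
  | inl (Negz 0) => [:: inl (Negz 1); v0']
  | inl (Negz k.+1) => [:: inl (Negz k.+2); inl (Negz k)]
  | inr i => match val i with
             | 0 => [:: v0; v0']
             | 1 => [:: vu; vd; inl (Negz 0)]
             | _ => [:: v0'; v0]
             end
  end.

Lemma eq_inl (a b : int) : (inl a == inl b :> vtx) = (a == b).
Proof. by apply/eqP/eqP => [[]|->]. Qed.

Lemma adj_nb x y : adj x y -> y \in nb x.
Proof.
case: x => [[[|k]|[|k]] | [[|[|[|?]]] ?]];
case: y => [[[|m]|[|m]] | [[|[|[|?]]] ?]] //=; rewrite /adj /edge_listed /vint /= ?inE /= ?eq_inl ?NegzE; try lia.
Qed.

Lemma nb_adj x y : y \in nb x -> adj x y.
Proof.
case: x => [[[|k]|[|k]] | [[|[|[|?]]] ?]] //=; rewrite ?inE;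
  (repeat case/orP) => /eqP -> //; rewrite /adj /edge_listed /vint /= ?eq_inl ?NegzE; try lia.
Qed.

Lemma nb_uniq x : uniq (nb x).
Proof.
case: x => [[[|k]|[|k]] | [[|[|[|?]]] ?]] //=; rewrite ?inE ?eq_inl ?NegzE; lia.
Qed.
Definition a00 : Defs.arc := mkarc (x:=v0) (y:=vu) isT.
Definition arcof (x y : vtx) : Defs.arc := insubd a00 (x, y).

Lemma val_arcof x y : adj x y -> val (arcof x y) = (x, y).
Proof. by move=> h; rewrite /arcof insubdK. Qed.

Lemma arcof_nb x y : y \in nb x -> val (arcof x y) = (x, y).
Proof. by move/nb_adj; apply: val_arcof. Qed.

Lemma sum_out (T : eqType) (idx : T) (op : Monoid.com_law idx) (v : vtx) (F : Defs.arc -> T) :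
  \big[op/idx]_(e \in [set e : Defs.arc | o e = v]) F e =
  \big[op/idx]_(w <- nb v) F (arcof v w).
Proof.
rewrite -(big_map (arcof v) xpredT) (fsbig_fwiden (map (arcof v) (nb v))) //.
- move=> e /= oe; apply/mapP; exists (t e).
    apply: adj_nb; rewrite -oe; exact: (valP e).
  apply: val_inj; rewrite val_arcof; last by rewrite -oe; exact: (valP e).
  by rewrite -oe /o /t; case: (val e).
- rewrite map_inj_in_uniq ?nb_uniq // => w1 w2 h1 h2 /(congr1 val).
  by rewrite !arcof_nb // => -[].
- move=> e [/= /mapP [w wn ->]] []; by rewrite /o arcof_nb.
Qed.

Lemma degE v : deg v = size (nb v).
Proof.
rewrite /deg (fsbig_fwiden (nb v)) ?nb_uniq //.
- by rewrite -sum1_size.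
- by move=> w /= /adj_nb.
- by move=> w [/= /nb_adj h []].
Qed.

Section G.
Variable R : realType.
Local Notation C := R[i].

Lemma groverE (Psi : state R) f : grover Psi f =
  \sum_(w <- nb (t f)) ((2%:R / (size (nb (t f)))%:R) - (w == o f)%:R) * Psi (arcof (t f) w).
Proof.
rewrite /grover sum_out big_seq [RHS]big_seq; apply: eq_bigr => w wn.
rewrite /o arcof_nb //= degE.
by rewrite xpair_eqE eqxx.
Qed.

Local Notation A := arcof.
Local Notation vP k := (inl (Posz k) : vtx).
Local Notation vN k := (inl (Negz k) : vtx).
Local Notation G := (@grover R).

Lemma h22 : (2%:R / 2%:R : C) = 1.
Proof. by rewrite divff // pnatr_eq0. Qed.

Ltac adjt := first [done | (rewrite /adj /edge_listed /vint /= ?eq_inl ?NegzE ?eqxx ?orbT //=; lia) | apply: nb_adj; rewrite /= ?inE ?eq_inl ?NegzE ?eqxx ?orbT //=; lia].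
Ltac kill_eq := repeat match goal with
  | |- context [(?a == ?a)] => rewrite eqxx
  | |- context [(?a == ?b)] => rewrite (_ : (a == b) = false); last by rewrite ?NegzE; lia
  end.
Ltac gsimp := rewrite groverE /t /o ?val_arcof /= ?big_cons ?big_nil /= ?eq_inl /=;
  [kill_eq; rewrite ?h22 /=; ring | ..]; adjt.

Lemma gT1 Psi k : G Psi (A (vP k.+1) (vP k.+2)) = Psi (A (vP k.+2) (vP k.+3)).
Proof. gsimp. Qed.
Lemma gT2 Psi k : G Psi (A (vP k.+2) (vP k.+1)) = Psi (A (vP k.+1) (vP k)).
Proof. gsimp. Qed.
Lemma gT3 Psi : G Psi (A v0 (vP 1)) = Psi (A (vP 1) (vP 2)).
Proof. gsimp. Qed.
Lemma gT4 Psi : G Psi (A (vP 1) v0) =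
  2%:R/3%:R * Psi (A v0 vu) + 2%:R/3%:R * Psi (A v0 vd) + (2%:R/3%:R - 1) * Psi (A v0 (vP 1)).
Proof. gsimp. Qed.
Lemma gL1 Psi k : G Psi (A (vN k) (vN k.+1)) = Psi (A (vN k.+1) (vN k.+2)).
Proof. gsimp. Qed.
Lemma gL2 Psi k : G Psi (A (vN k.+2) (vN k.+1)) = Psi (A (vN k.+1) (vN k)).
Proof. gsimp. Qed.
Lemma gL2' Psi : G Psi (A (vN 1) (vN 0)) = Psi (A (vN 0) v0').
Proof. gsimp. Qed.
Lemma gL3 Psi : G Psi (A v0' (vN 0)) = Psi (A (vN 0) (vN 1)).
Proof. gsimp. Qed.
Lemma gL4 Psi : G Psi (A (vN 0) v0') =
  2%:R/3%:R * Psi (A v0' vu) + 2%:R/3%:R * Psi (A v0' vd) + (2%:R/3%:R - 1) * Psi (A v0' (vN 0)).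
Proof. gsimp. Qed.
Lemma gC1 Psi : G Psi (A v0' vu) = Psi (A vu v0).
Proof. gsimp. Qed.
Lemma gC2 Psi : G Psi (A v0' vd) = Psi (A vd v0).
Proof. gsimp. Qed.
Lemma gC3 Psi : G Psi (A v0 vd) = Psi (A vd v0').
Proof. gsimp. Qed.
Lemma gC4 Psi : G Psi (A v0 vu) = Psi (A vu v0').
Proof. gsimp. Qed.
Lemma gC5 Psi : G Psi (A vu v0) =
  (2%:R/3%:R - 1) * Psi (A v0 vu) + 2%:R/3%:R * Psi (A v0 vd) + 2%:R/3%:R * Psi (A v0 (vP 1)).
Proof. gsimp. Qed.
Lemma gC6 Psi : G Psi (A vd v0) =
  2%:R/3%:R * Psi (A v0 vu) + (2%:R/3%:R - 1) * Psi (A v0 vd) + 2%:R/3%:R * Psi (A v0 (vP 1)).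
Proof. gsimp. Qed.
Lemma gC7 Psi : G Psi (A vd v0') =
  2%:R/3%:R * Psi (A v0' vu) + (2%:R/3%:R - 1) * Psi (A v0' vd) + 2%:R/3%:R * Psi (A v0' (vN 0)).
Proof. gsimp. Qed.
Lemma gC8 Psi : G Psi (A vu v0') =
  (2%:R/3%:R - 1) * Psi (A v0' vu) + 2%:R/3%:R * Psi (A v0' vd) + 2%:R/3%:R * Psi (A v0' (vN 0)).
Proof. gsimp. Qed.
End G.

Local Open Scope ereal_scope.
Local Open Scope ring_scope.
Section Small.
Variable R : realType.
Definition small (u : nat -> R) := forall e, 0 < e -> exists N, forall n, (N <= n)%N -> u n <= e.

Lemma small_add u v : small u -> small v -> small (fun n => u n + v n).
Proof.
move=> hu hv e e0; have e20 : 0 < e / 2 by rewrite divr_gt0.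
have [N1 h1] := hu _ e20; have [N2 h2] := hv _ e20.
exists (maxn N1 N2) => n hn.
have := h1 n (leq_trans (leq_maxl _ _) hn); have := h2 n (leq_trans (leq_maxr _ _) hn).
lra.
Qed.

Lemma small_scale c u : 0 <= c -> small u -> small (fun n => c * u n).
Proof.
move=> c0 hu e e0; have ec : 0 < e / (c + 1) by rewrite divr_gt0 // ltr_wpDl.
have [N h] := hu _ ec; exists N => n /h hn.
apply: (le_trans (ler_wpM2l c0 hn)).
rewrite mulrA ler_pdivrMr ?ltr_wpDl // mulrDr mulr1 mulrC lerDl; exact: ltW.
Qed.

Lemma small_le u v : (forall n, v n <= u n) -> small u -> small v.
Proof. move=> h hu e e0; have [N hN] := hu _ e0; exists N => n /hN; exact: le_trans. Qed.

Lemma small_shift u k : small u -> small (fun n => u (n + k)%N).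
Proof. move=> hu e e0; have [N hN] := hu _ e0; exists N => n hn; apply: hN; exact: leq_trans (leq_addr _ _). Qed.

Lemma small_unshift u k : small (fun n => u (n + k)%N) -> small u.
Proof.
move=> hu e e0; have [N hN] := hu _ e0; exists (N + k)%N => n hn.
have := hN (n - k)%N; rewrite subnK; last by lia.
by apply; lia.
Qed.

Lemma small_sq u : (forall n, 0 <= u n) -> small u -> small (fun n => u n ^+ 2).
Proof.
move=> u0 hu e e0; have m0 : 0 < Num.min e 1 by rewrite lt_min e0 ltr01.
have [N hN] := hu _ m0; exists N => n /hN; rewrite le_min => /andP [h1 h2].
rewrite expr2 -[e]mulr1; apply: ler_pM => //; exact: u0.
Qed.

Lemma small_sqrt u : (forall n, 0 <= u n) -> small (fun n => u n ^+ 2) -> small u.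
Proof.
move=> u0 hu e e0; have [N hN] := hu (e ^+ 2) (exprn_gt0 _ e0); exists N => n /hN h.
by rewrite -ler_sqr ?nnegrE ?u0 // ltW.
Qed.

Lemma small_cst0 : small (fun _ => 0).
Proof. by move=> e e0; exists 0%N => n _; exact: ltW. Qed.


Lemma decay u d : (forall n, 0 <= u n) ->
  (forall n, 3%:R * u n.+2 <= u n + d n) -> small d -> small u.
Proof.
move=> u0 hrec hd e e0.
have [N hN] := hd _ e0.
set Cc := u N + u N.+1.
have C0 : 0 <= Cc by rewrite addr_ge0.
pose Y k := Cc / 3%:R ^+ k.
have YS k : 3%:R * Y k.+1 = Y k.
  have h3 : (3%:R : R) != 0 by rewrite pnatr_eq0.
  have h3k : (3%:R : R) ^+ k != 0 by rewrite expf_neq0.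
  rewrite /Y exprS; field; by rewrite expf_neq0 // pnatr_eq0.
have Y0 k : 0 <= Y k by rewrite /Y divr_ge0 // exprn_ge0.
have Ymono k j : Y (k + j)%N <= Y k.
  elim: j => [|j IH]; first by rewrite addn0.
  rewrite addnS; have := YS (k + j)%N; have := Y0 (k + j).+1; lra.
have key : forall k, u (N + k.*2)%N <= Y k + e / 2 /\ u (N + k.*2).+1 <= Y k + e / 2.
  elim=> [|k [IH1 IH2]].
    rewrite !addn0 /Y expr0 divr1 /Cc; split.
      have := u0 N.+1; have := e0; lra.
    have := u0 N; have := e0; lra.
  have d1 := hN (N + k.*2)%N (leq_addr _ _).
  have d2 := hN (N + k.*2).+1 (leq_trans (leq_addr _ _) (leqnSn _)).
  have r1 := hrec (N + k.*2)%N; have r2 := hrec (N + k.*2).+1.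
  have := YS k.
  rewrite doubleS !addnS; split; lra.
have [k hk] : exists k : nat, Y k <= e / 2.
  have h0 : 0 < e / 2 by rewrite divr_gt0.
  have x0 : 0 <= Cc / (e / 2) by rewrite divr_ge0 // ltW.
  have [k hk] : exists k : nat, Cc / (e / 2) < k%:R.
    by eexists; exact: (archimedean.Num.Theory.archi_boundP x0).
  exists k; rewrite /Y ler_pdivrMr ?exprn_gt0 //.
  have h3 : (k%:R : R) <= 3%:R ^+ k.
    by rewrite -natrX ler_nat ltnW // ltn_expl.
  rewrite ltr_pdivrMr // in hk.
  apply: (le_trans (ltW hk)); rewrite mulrC ler_wpM2l //; exact: ltW.
exists (N + k.*2)%N => n hn.
have hm : n = (N + ((n - N)./2).*2 + odd (n - N))%N.
  rewrite -addnA [(_.*2 + _)%N]addnC odd_double_half subnKC //.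
  exact: leq_trans (leq_addr _ _) hn.
have hk' : (k <= (n - N)./2)%N.
  have := odd_double_half (n - N); move: hn; rewrite -!muln2; lia.
set j := ((n - N)./2)%N in hm hk'.
have := Ymono k (j - k)%N; rewrite subnKC //.
move: hm; case: (odd (n - N)) => /= -> ; rewrite ?addn0 ?addn1; 
  case: (key j) => h1 h2 hY; lra.
Qed.

Lemma esup_le_small (u : nat -> R) e : 0 < e -> small u ->
  (limn_esup (fun n => (u n)%:E) <= e%:E)%E.
Proof.
move=> e0 hu; have [N hN] := hu _ e0.
rewrite limn_esup_lim; apply: lime_le; first exact: is_cvg_esups.
exists N => // n /= hn; apply: ub_ereal_sup => _ [k /= hk <-].
by rewrite lee_fin; apply: hN; exact: leq_trans hk.
Qed.

Lemma small_noloc (u : nat -> R) : small u -> ~ (0 < limn_esup (fun n => (u n)%:E))%E.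
Proof.
move=> hu; case E: (limn_esup _) => [r| |].
- rewrite lte_fin => r0.
  have := esup_le_small (divr_gt0 r0 (ltr0Sn _ 1)) hu; rewrite E lee_fin; lra.
- by have := esup_le_small ltr01 hu; rewrite E.
- by [].
Qed.

Lemma loc_of_lb (u : nat -> R) c : 0 < c -> (forall n, c <= u n) ->
  (0 < limn_esup (fun n => (u n)%:E))%E.
Proof.
move=> c0 hc; apply: (@lt_le_trans _ _ c%:E); first by rewrite lte_fin.
rewrite limn_esup_lim; apply: lime_ge; first exact: is_cvg_esups.
exists 0%N => // n _; apply: (@le_trans _ _ (u n)%:E); first by rewrite lee_fin.
apply: ereal_sup_ubound; by exists n => /=.
Qed.

Lemma tail_small (Psi0 : state R) (f : nat -> Defs.arc) : injective f ->
  sqnorm Psi0 = 1%E -> small (fun k => sqabs (Psi0 (f k))).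
Proof.
move=> finj hn.
pose x k := sqabs (Psi0 (f k)).
have x0 k : 0 <= x k by rewrite /x /sqabs addr_ge0 // sqr_ge0.
have hsum N : \sum_(k < N) x k <= 1.
  have U : uniq (map f (iota 0 N)) by rewrite map_inj_uniq // iota_uniq.
  have : ((\sum_(e \in [set` map f (iota 0 N)]) (sqabs (Psi0 e))%:E) <= sqnorm Psi0)%E.
    apply: ereal_sup_ubound; exists [set` map f (iota 0 N)] => //.
    by rewrite /fsets /=; split.
  rewrite hn -fsbig_seq // big_map sumEFin lee_fin.
  by move=> h; rewrite -(big_mkord xpredT x) /index_iota subn0.
have cv : cvgn (series x).
  apply: nondecreasing_is_cvgn.
    apply/nondecreasing_seqP => n; rewrite /series /= big_nat_recr //= lerDl; exact: x0.
  exists 1 => _ [n _ <-]; rewrite /series /= big_mkord; exact: hsum.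
have := cvg_series_cvg_0 cv; move/cvgr0Pnorm_le => h e e0.
have [N _ hN] := h e e0; exists N => n /hN /=.
by rewrite ger0_norm.
Qed.
End Small.

Local Open Scope ring_scope.
Local Open Scope classical_set_scope.


Import ComplexField.Normc.
Section C.
Variable R : realType.
Local Notation C := R[i].
Local Open Scope complex_scope.

Lemma sqabsE (z : C) : sqabs z = normc z ^+ 2.
Proof. by case: z => a b; rewrite /sqabs /= sqr_sqrtr // addr_ge0 // sqr_ge0. Qed.

Lemma normc_ge0 (z : C) : 0 <= normc z.
Proof. by case: z => a b /=; rewrite sqrtr_ge0. Qed.

Lemma sqabs_ge0 (z : C) : 0 <= sqabs z.
Proof. by rewrite sqabsE sqr_ge0. Qed.

Lemma normc_real (x : R) : normc (x%:C) = `|x|.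
Proof. by rewrite /= expr0n /= addr0 sqrtr_sqr. Qed.

Lemma realc_div (x y : R) : ((x / y)%:C : C) = x%:C / y%:C.
Proof. by rewrite fmorph_div. Qed.

Lemma k2E : (2%:R / 3%:R : C) = (2%:R / 3%:R : R)%:C.
Proof. by rewrite fmorph_div /= !rmorph_nat. Qed.

Lemma conj_i : ('i : C)^*%C = - 'i.
Proof. by apply/eqP; rewrite eq_complex /= oppr0 !eqxx. Qed.
End C.

Section Dyn.
Variable R : realType.
Local Notation C := R[i].
Local Open Scope complex_scope.
Local Notation A := arcof.
Local Notation vP k := (inl (Posz k) : vtx).
Local Notation vN k := (inl (Negz k) : vtx).
Local Notation nc := (@normc R).

Definition k1 : C := 2%:R/3%:R - 1 + 2%:R/3%:R.
Definition k2 : C := 2%:R/3%:R.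

Lemma nc_k1 : nc k1 = 3%:R^-1.
Proof.
have -> : k1 = ((2%:R/3%:R - 1 + 2%:R/3%:R : R))%:C.
  by rewrite /k1 rmorphD rmorphB /= fmorph_div /= !rmorph_nat rmorph1.
rewrite normc_real ger0_norm; last by lra.
by field.
Qed.

Lemma nc_k2 : nc k2 = 2%:R / 3%:R.
Proof.
rewrite /k2 k2E normc_real ger0_norm //; lra.
Qed.

Lemma nk (x y : C) : nc (k1 * x + k2 * y) <= nc x / 3%:R + 2%:R * nc y / 3%:R.
Proof.
apply: le_trans (le_normcD _ _) _.
rewrite [nc (k1 * x)]normcM [nc (k2 * y)]normcM nc_k1 nc_k2. lra.
Qed.

Lemma sq_sub (x y : C) : sqabs (x - y) <= 2%:R * (sqabs x + sqabs y).
Proof.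
rewrite !sqabsE; have h := le_normcD x (- y); rewrite normcN in h.
have h0 := normc_ge0 (x - y); have hx := normc_ge0 x; have hy := normc_ge0 y.
apply: (@le_trans _ _ ((nc x + nc y) ^+ 2)); first by rewrite ler_sqr ?nnegrE ?addr_ge0.
rewrite -subr_ge0.
have -> : 2%:R * (nc x ^+ 2 + nc y ^+ 2) - (nc x + nc y) ^+ 2 = (nc x - nc y) ^+ 2 by ring.
exact: sqr_ge0.
Qed.
End Dyn.

Section Evo.
Variable R : realType.
Local Notation C := R[i].
Local Open Scope complex_scope.
Local Notation A := arcof.
Local Notation vP k := (inl (Posz k) : vtx).
Local Notation vN k := (inl (Negz k) : vtx).
Local Notation nc := (@normc R).
Variable Psi0 : state R.
Local Notation P t := (Psi_t Psi0 t).

Definition rin k := A (vP k.+1) (vP k.+2).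
Definition lin k := A (vN k) (vN k.+1).
Definition rout k := A (vP k.+1) (vP k).
Definition prevL k : vtx := if k is k'.+1 then vN k' else v0'.
Definition lout k := A (vN k) (prevL k).

Lemma PS t : P t.+1 = grover (P t). Proof. by []. Qed.

Lemma P_rin t k : P t (rin k) = Psi0 (rin (k + t)).
Proof. elim: t k => [|t IH] k; first by rewrite addn0. by rewrite PS /rin gT1 IH addSnnS. Qed.

Lemma P_lin t k : P t (lin k) = Psi0 (lin (k + t)).
Proof. elim: t k => [|t IH] k; first by rewrite addn0. by rewrite PS /lin gL1 IH addSnnS. Qed.

Lemma P_rout t k : P t.+1 (rout k.+1) = P t (rout k).
Proof. by rewrite PS /rout gT2. Qed.

Lemma P_lout t k : P t.+1 (lout k.+1) = P t (lout k).
Proof. by case: k => [|k]; rewrite PS /lout /= ?gL2' ?gL2. Qed.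

Definition a1 := A v0' vu. Definition a2 := A vu v0. Definition a3 := A v0 vd. Definition a4 := A vd v0'.
Definition b1 := A v0' vd. Definition b2 := A vd v0. Definition b3 := A v0 vu. Definition b4 := A vu v0'.
Definition Rf := A v0 (vP 1). Definition Lf := A v0' (vN 0).

Lemma P_Rf t : P t.+1 Rf = Psi0 (rin t).
Proof. by rewrite PS /Rf gT3 -/(rin 0) P_rin add0n. Qed.
Lemma P_Lf t : P t.+1 Lf = Psi0 (lin t).
Proof. by rewrite PS /Lf gL3 -/(lin 0) P_lin add0n. Qed.

Lemma P_rout0 t : P t.+1 (rout 0) =
  2%:R/3%:R * P t b3 + 2%:R/3%:R * P t a3 + (2%:R/3%:R - 1) * P t Rf.
Proof. by rewrite PS /rout gT4. Qed.
Lemma P_lout0 t : P t.+1 (lout 0) =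
  2%:R/3%:R * P t a1 + 2%:R/3%:R * P t b1 + (2%:R/3%:R - 1) * P t Lf.
Proof. by rewrite PS /lout gL4. Qed.

Definition dd (Psi : state R) (j : nat) : C :=
  match j with
  | 0 => Psi a1 - Psi b1
  | 1 => Psi a2 - Psi b2
  | 2 => Psi a3 - Psi b3
  | _ => Psi a4 - Psi b4
  end.

Lemma dd_rot t j : (j < 4)%N -> dd (P t.+1) j = dd (P t) ((j.+1) %% 4).
Proof.
case: j => [|[|[|[|j]]]] // _; rewrite /dd PS /a1 /a2 /a3 /a4 /b1 /b2 /b3 /b4.
- by rewrite gC1 gC2.
- by rewrite gC5 gC6; ring.
- by rewrite gC3 gC4.
- by rewrite gC7 gC8; ring.
Qed.
End Evo.

Section Inner.
Variable R : realType.
Local Notation C := R[i].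
Local Open Scope complex_scope.
Local Notation A := arcof.
Local Notation vP k := (inl (Posz k) : vtx).
Local Notation vN k := (inl (Negz k) : vtx).

Lemma eqA x y x' y' : adj x y -> adj x' y' -> (A x y == A x' y') = ((x == x') && (y == y')).
Proof. by move=> h h'; rewrite -val_eqE /= !val_arcof. Qed.

Lemma mkarcE x y (h : adj x y) : mkarc h = A x y.
Proof. by apply: val_inj; rewrite /= val_arcof. Qed.

Definition cyc8 := [:: a1; a2; a3; a4; b1; b2; b3; b4].

Lemma wm_c m (e : Defs.arc) : wm R m c_cycle e =
  'i ^+ (m * 1) * (e == a1)%:R + 'i ^+ (m * 2) * (e == a2)%:R +
  'i ^+ (m * 3) * (e == a3)%:R + 'i ^+ (m * 4) * (e == a4)%:R.
Proof.
rewrite /wm !big_ord_recl big_ord0 /= /bump /= addr0 !addrA.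
rewrite (_ : tnth c_cycle ord0 = a1); last by apply: val_inj; rewrite val_arcof.
rewrite (_ : tnth c_cycle (lift ord0 ord0) = a2); last by apply: val_inj; rewrite val_arcof.
rewrite (_ : tnth c_cycle (lift ord0 (lift ord0 ord0)) = a3); last by apply: val_inj; rewrite val_arcof.
by rewrite (_ : tnth c_cycle (lift ord0 (lift ord0 (lift ord0 ord0))) = a4); last by apply: val_inj; rewrite val_arcof.
Qed.

Lemma wm_cb m (e : Defs.arc) : wm R m cbar_cycle e =
  'i ^+ (m * 1) * (e == b1)%:R + 'i ^+ (m * 2) * (e == b2)%:R +
  'i ^+ (m * 3) * (e == b3)%:R + 'i ^+ (m * 4) * (e == b4)%:R.
Proof.
rewrite /wm !big_ord_recl big_ord0 /= /bump /= addr0 !addrA.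
rewrite (_ : tnth cbar_cycle ord0 = b1); last by apply: val_inj; rewrite val_arcof.
rewrite (_ : tnth cbar_cycle (lift ord0 ord0) = b2); last by apply: val_inj; rewrite val_arcof.
rewrite (_ : tnth cbar_cycle (lift ord0 (lift ord0 ord0)) = b3); last by apply: val_inj; rewrite val_arcof.
by rewrite (_ : tnth cbar_cycle (lift ord0 (lift ord0 (lift ord0 ord0))) = b4); last by apply: val_inj; rewrite val_arcof.
Qed.

Lemma cyc8_uniq : uniq cyc8.
Proof. by rewrite /cyc8 /= !inE /a1 /a2 /a3 /a4 /b1 /b2 /b3 /b4 !eqA. Qed.


Lemma gam_off m e : e \notin cyc8 -> gam R m e = 0.
Proof.
rewrite /gam wm_c wm_cb /cyc8 !inE.
do 8! (case: eqP => //= _).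
by move=> _; rewrite !mulr0 !addr0 subrr.
Qed.

Ltac gsol := rewrite /gam wm_c wm_cb /a1 /a2 /a3 /a4 /b1 /b2 /b3 /b4 !eqA //= !mulr1n !mulr0n;
  rewrite ?mulr0 ?mulr1 ?addr0 ?add0r ?subr0 ?sub0r.

Lemma gam_a1 m : gam R m a1 = 'i ^+ (m * 1). Proof. by gsol. Qed.
Lemma gam_a2 m : gam R m a2 = 'i ^+ (m * 2). Proof. by gsol. Qed.
Lemma gam_a3 m : gam R m a3 = 'i ^+ (m * 3). Proof. by gsol. Qed.
Lemma gam_a4 m : gam R m a4 = 'i ^+ (m * 4). Proof. by gsol. Qed.
Lemma gam_b1 m : gam R m b1 = - 'i ^+ (m * 1). Proof. by gsol. Qed.
Lemma gam_b2 m : gam R m b2 = - 'i ^+ (m * 2). Proof. by gsol. Qed.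
Lemma gam_b3 m : gam R m b3 = - 'i ^+ (m * 3). Proof. by gsol. Qed.
Lemma gam_b4 m : gam R m b4 = - 'i ^+ (m * 4). Proof. by gsol. Qed.

Lemma inner_cyc (gamma Psi : state R) : (forall e, e \notin cyc8 -> gamma e = 0) ->
  inner_fin gamma Psi = \sum_(e <- cyc8) (gamma e)^* * Psi e.
Proof.
move=> h; rewrite /inner_fin -(fsbig_widen [set` cyc8]) //.
- by rewrite -fsbig_seq // cyc8_uniq.
- move=> e [_ he] /=; rewrite h; first by rewrite raddf0 mul0r.
  by apply/negP => hin; apply: he.
Qed.

Lemma inner_sym (gamma Psi : state R) : (forall e, e \notin cyc8 -> gamma e = 0) ->
  gamma b1 = - gamma a1 -> gamma b2 = - gamma a2 ->
  gamma b3 = - gamma a3 -> gamma b4 = - gamma a4 ->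
  inner_fin gamma Psi = (gamma a1)^* * dd Psi 0 + (gamma a2)^* * dd Psi 1 +
                        (gamma a3)^* * dd Psi 2 + (gamma a4)^* * dd Psi 3.
Proof.
move=> h h1 h2 h3 h4; rewrite inner_cyc // /cyc8 !big_cons big_nil h1 h2 h3 h4 /dd.
rewrite !rmorphN /=; ring.
Qed.

Lemma dd0_perp (Psi : state R) : (forall j, (j < 4)%N -> dd Psi j = 0) -> inGamma_perp Psi.
Proof.
move=> h gamma [a ->].
rewrite inner_sym.
- rewrite (h 0%N isT) (h 1%N isT) (h 2%N isT) (h 3%N isT).
  have z4 : forall x y z w : C, x * 0 + y * 0 + z * 0 + w * 0 = 0.
    by move=> *; rewrite !mulr0 !addr0.
  exact: z4.
- by move=> e he; apply: big1 => m _; rewrite gam_off // mulr0.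
- by rewrite -sumrN; apply: eq_bigr => m _; rewrite gam_b1 gam_a1 mulrN.
- by rewrite -sumrN; apply: eq_bigr => m _; rewrite gam_b2 gam_a2 mulrN.
- by rewrite -sumrN; apply: eq_bigr => m _; rewrite gam_b3 gam_a3 mulrN.
- by rewrite -sumrN; apply: eq_bigr => m _; rewrite gam_b4 gam_a4 mulrN.
Qed.

Lemma inner_gam m (Psi : state R) : inner_fin (gam R m) Psi =
  ('i ^+ (m * 1))^* * dd Psi 0 + ('i ^+ (m * 2))^* * dd Psi 1 +
  ('i ^+ (m * 3))^* * dd Psi 2 + ('i ^+ (m * 4))^* * dd Psi 3.
Proof.
rewrite inner_sym ?gam_a1 ?gam_a2 ?gam_a3 ?gam_a4 ?gam_b1 ?gam_b2 ?gam_b3 ?gam_b4 //.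
exact: gam_off.
Qed.

Lemma gam_in (m : 'I_4) : inGamma (gam R m.+1).
Proof.
exists (fun m' => (m' == m)%:R); apply/funext => e.
rewrite (bigD1 m) //= eqxx mul1r big1 ?addr0 // => i /negbTE ->; by rewrite mul0r.
Qed.

Lemma i4 : ('i : C) ^+ 4 = 1.
Proof. by rewrite (_ : 4 = 2 * 2)%N // exprM sqr_i sqrrN expr1n. Qed.

Lemma iS4 n : ('i : C) ^+ n.+4 = 'i ^+ n.
Proof. by rewrite -addn4 exprD i4 mulr1. Qed.

Lemma i3 : ('i : C) ^+ 3 = - 'i.
Proof. by rewrite exprS sqr_i mulrN1. Qed.

Lemma conjN1 : (-1 : C)^* = -1.
Proof. by apply/eqP; rewrite eq_complex /= ?oppr0 ?opprK !eqxx. Qed.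
Lemma conjNi : (- 'i : C)^* = 'i.
Proof. by apply/eqP; rewrite eq_complex /= ?oppr0 ?opprK !eqxx. Qed.

Lemma i_neq0 : ('i : C) != 0.
Proof. by apply/eqP => h; have := sqr_i R; rewrite h expr0n /= => /eqP; rewrite eq_sym oppr_eq0 oner_eq0. Qed.

End Inner.

Section T.
Variable R : realType.
Local Notation C := R[i].
Local Open Scope complex_scope.
Lemma perp_dd0 (Psi : state R) : inGamma_perp Psi -> forall j, (j < 4)%N -> dd Psi j = 0.
Proof.
move=> hp.
have E m : (m < 4)%N -> inner_fin (gam R m.+1) Psi = 0.
  by move=> hm; apply: (hp (gam R m.+1)); exact: (@gam_in R (Ordinal hm)).
have E1 := E 0%N isT; have E2 := E 1%N isT; have E3 := E 2%N isT; have E4 := E 3%N isT.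
rewrite inner_gam in E1. idtac "A".
rewrite inner_gam in E2; rewrite inner_gam in E3; rewrite inner_gam in E4. idtac "B".
rewrite -[(1*1)%N]/1%N -[(1*2)%N]/2%N -[(1*3)%N]/3%N -[(1*4)%N]/4%N in E1.
rewrite -[(2*1)%N]/2%N -[(2*2)%N]/4%N -[(2*3)%N]/6%N -[(2*4)%N]/8%N in E2.
rewrite -[(3*1)%N]/3%N -[(3*2)%N]/6%N -[(3*3)%N]/9%N -[(3*4)%N]/12%N in E3.
rewrite -[(4*1)%N]/4%N -[(4*2)%N]/8%N -[(4*3)%N]/12%N -[(4*4)%N]/16%N in E4.
rewrite ?iS4 ?expr0 ?expr1 ?sqr_i ?i3 in E1 E2 E3 E4.
have c1 : Num.conj (1 : C) = 1 by rewrite rmorph1.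
have ci : Num.conj ('i : C) = - 'i by exact: conj_i.
have cN1 : Num.conj (-1 : C) = -1 by exact: conjN1.
have cNi : Num.conj (- 'i : C) = 'i by exact: conjNi.
rewrite ?c1 ?ci ?cN1 ?cNi ?mul1r ?mulN1r in E1 E2 E3 E4.
move: E1 E2 E3 E4; rewrite /dd.
move: (Psi a1 - Psi b1) (Psi a2 - Psi b2) (Psi a3 - Psi b3) (Psi a4 - Psi b4) => x y z w E1 E2 E3 E4.
have h2 : (2%:R : C) != 0 by rewrite pnatr_eq0.
have e1 : 2%:R * (w - y) = 0.
  have -> : 2%:R * (w - y) = (- 'i * x - y + 'i * z + w) + ('i * x - y + - 'i * z + w) by ring.
  by rewrite E1 E3 addr0.
have e2 : 2%:R * (w + y) = 0.
  have -> : 2%:R * (w + y) = (- x + y - z + w) + (x + y + z + w) by ring.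
  by rewrite E2 E4 addr0.
have e3 : 2%:R * 'i * (z - x) = 0.
  have -> : 2%:R * 'i * (z - x) = (- 'i * x - y + 'i * z + w) - ('i * x - y + - 'i * z + w) by ring.
  by rewrite E1 E3 subr0.
have e4 : 2%:R * (x + z) = 0.
  have -> : 2%:R * (x + z) = (x + y + z + w) - (- x + y - z + w) by ring.
  by rewrite E2 E4 subr0.
move/eqP: e1; rewrite mulf_eq0 (negbTE h2) /= subr_eq0 => /eqP e1.
move/eqP: e3; rewrite !mulf_eq0 (negbTE h2) (negbTE (@i_neq0 R)) /= subr_eq0 => /eqP e3.
subst w z.
have hy : y = 0.
  have : 4%:R * y = 0 by rewrite -[RHS]e2; ring.
  by move/eqP; rewrite mulf_eq0 pnatr_eq0 /= => /eqP.
have hx : x = 0.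
  have : 4%:R * x = 0 by rewrite -[RHS]e4; ring.
  by move/eqP; rewrite mulf_eq0 pnatr_eq0 /= => /eqP.
by case=> [|[|[|[|j]]]] _ /=; rewrite ?hx ?hy.
Qed.

End T.

Local Open Scope ring_scope.
Local Open Scope classical_set_scope.


Import ComplexField.Normc.
Section PX.
Variable R : realType.
Local Notation C := R[i].
Local Notation A := arcof.
Local Notation vP k := (inl (Posz k) : vtx).
Local Notation vN k := (inl (Negz k) : vtx).
Variable Psi0 : state R.
Local Notation P t := (Psi_t Psi0 t).
Local Notation sq := (@sqabs R).

Lemma muE n v : mu Psi0 n v = \sum_(w <- nb v) sq (P n (A v w)).
Proof. by rewrite /mu sum_out. Qed.

Lemma probX0 n : probX Psi0 n 0 =
  sq (P n b3) + sq (P n a3) + sq (P n Rf) + sq (P n a2) + sq (P n b4) +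
  sq (P n a1) + sq (P n b1) + sq (P n Lf) + sq (P n a4) + sq (P n b2).
Proof.
rewrite /probX /Vset /= (fsbig_fwiden [:: v0; vu; v0'; vd]) //=.
- rewrite !big_cons big_nil !muE /= !big_cons !big_nil /b3 /a3 /Rf /a2 /b4 /a1 /b1 /Lf /a4 /b2.
  rewrite !addr0 !addrA //.
- by move=> x [[[->|->]|->]|->] /=; rewrite !inE eqxx ?orbT.
- move=> x [/= hx hn]; exfalso; apply: hn; move: hx; rewrite !inE.
  by case/or4P => /eqP ->; [left; left; left | left; left; right | left; right | right].
Qed.

Lemma probXP n k : probX Psi0 n (Posz k.+1) = sq (P n (rin k)) + sq (P n (rout k)).
Proof. by rewrite /probX /Vset /= fsbig_set1 muE /= !big_cons big_nil addr0. Qed.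

Lemma probXN n k : probX Psi0 n (Negz k) = sq (P n (lin k)) + sq (P n (lout k)).
Proof. by case: k => [|k]; rewrite /probX /Vset /= fsbig_set1 muE /= !big_cons big_nil addr0. Qed.

Local Notation nc := (@normc R).
Local Notation k1 := (@k1 R).
Local Notation k2 := (@k2 R).

Lemma sm_nc (f : nat -> C) : small (fun t => sq (f t)) -> small (fun t => nc (f t)).
Proof.
move=> h; apply: small_sqrt => [n|]; first exact: normc_ge0.
by apply: small_le h => n; rewrite sqabsE.
Qed.

Lemma sm_sq (f : nat -> C) : small (fun t => nc (f t)) -> small (fun t => sq (f t)).
Proof.
move=> h; have := small_sq (fun n => normc_ge0 (f n)) h.
by apply: small_le => n; rewrite sqabsE.
Qed.

Lemma adj_rin k : adj (vP k.+1) (vP k.+2). Proof. by apply: nb_adj; rewrite /= inE eqxx. Qed.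
Lemma adj_lin k : adj (vN k) (vN k.+1).
Proof. by case: k => [|k]; apply: nb_adj; rewrite /= inE eqxx. Qed.

Lemma rin_inj : injective rin.
Proof. by move=> x y /(congr1 val); rewrite /rin !val_arcof ?adj_rin // => -[]. Qed.
Lemma lin_inj : injective lin.
Proof. by move=> x y /(congr1 val); rewrite /lin !val_arcof ?adj_lin // => -[]. Qed.

Variable hn : sqnorm Psi0 = 1%E.

Lemma sm_rin0 : small (fun t => nc (Psi0 (rin t))).
Proof. exact/sm_nc/tail_small/hn/rin_inj. Qed.
Lemma sm_lin0 : small (fun t => nc (Psi0 (lin t))).
Proof. exact/sm_nc/tail_small/hn/lin_inj. Qed.

Lemma sm_Rf : small (fun t => nc (P t Rf)).
Proof.
apply: (small_unshift (k := 1)); apply: small_le sm_rin0 => n.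
by rewrite addn1 P_Rf.
Qed.
Lemma sm_Lf : small (fun t => nc (P t Lf)).
Proof.
apply: (small_unshift (k := 1)); apply: small_le sm_lin0 => n.
by rewrite addn1 P_Lf.
Qed.

Lemma sm_rin k : small (fun t => nc (P t (rin k))).
Proof.
apply: small_le (small_shift k sm_rin0) => n; by rewrite P_rin addnC.
Qed.
Lemma sm_lin k : small (fun t => nc (P t (lin k))).
Proof.
apply: small_le (small_shift k sm_lin0) => n; by rewrite P_lin addnC.
Qed.

Section Hard.
Hypothesis hdd : forall t j, (j < 4)%N -> dd (P t) j = 0.

Lemma eqb1 t : P t b1 = P t a1. Proof. by have := @hdd t 0%N isT; rewrite /dd => /eqP; rewrite subr_eq0 => /eqP ->. Qed.
Lemma eqb2 t : P t b2 = P t a2. Proof. by have := @hdd t 1%N isT; rewrite /dd => /eqP; rewrite subr_eq0 => /eqP ->. Qed.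
Lemma eqb3 t : P t b3 = P t a3. Proof. by have := @hdd t 2%N isT; rewrite /dd => /eqP; rewrite subr_eq0 => /eqP ->. Qed.
Lemma eqb4 t : P t b4 = P t a4. Proof. by have := @hdd t 3%N isT; rewrite /dd => /eqP; rewrite subr_eq0 => /eqP ->. Qed.

Lemma r1 t : P t.+1 a1 = P t a2. Proof. by rewrite PS /a1 gC1. Qed.
Lemma r2 t : P t.+1 a2 = k1 * P t a3 + k2 * P t Rf.
Proof. by rewrite PS /a2 gC5 -/b3 -/a3 -/Rf eqb3 /k1 /k2; ring. Qed.
Lemma r3 t : P t.+1 a3 = P t a4. Proof. by rewrite PS /a3 gC3. Qed.
Lemma r4 t : P t.+1 a4 = k1 * P t a1 + k2 * P t Lf.
Proof. by rewrite PS /a4 gC7 -/b1 -/a1 -/Lf eqb1 /k1 /k2; ring. Qed.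

Definition NN t := nc (P t a1) + nc (P t a2) + nc (P t a3) + nc (P t a4).

Lemma NN_rec t : 3%:R * NN t.+2 <= NN t +
  2%:R * (nc (P t Rf) + nc (P t.+1 Rf) + nc (P t Lf) + nc (P t.+1 Lf)).
Proof.
rewrite /NN r1 r2 r3 r4 r2 r4 r1 r3.
have h1 := nk (P t a3) (P t Rf); have h2 := nk (P t a4) (P t.+1 Rf).
have h3 := nk (P t a1) (P t Lf); have h4 := nk (P t a2) (P t.+1 Lf).
lra.
Qed.

Lemma sm_NN : small NN.
Proof.
apply: (decay (d := fun t => 2%:R * (nc (P t Rf) + nc (P t.+1 Rf) + nc (P t Lf) + nc (P t.+1 Lf)))).
- by move=> n; rewrite /NN !addr_ge0 ?normc_ge0.
- exact: NN_rec.
- apply: small_scale; first by [].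
  have hR1 : small (fun t => nc (P t.+1 Rf)).
    by apply: small_le (small_shift 1 sm_Rf) => n; rewrite addn1.
  have hL1 : small (fun t => nc (P t.+1 Lf)).
    by apply: small_le (small_shift 1 sm_Lf) => n; rewrite addn1.
  exact: small_add (small_add (small_add sm_Rf hR1) sm_Lf) hL1.
Qed.

Lemma le_NN1 t : nc (P t a1) <= NN t.
Proof. by rewrite /NN -!addrA lerDl !addr_ge0 ?normc_ge0. Qed.
Lemma le_NN2 t : nc (P t a2) <= NN t.
Proof. rewrite /NN; have := normc_ge0 (P t a1); have := normc_ge0 (P t a3); have := normc_ge0 (P t a4); lra. Qed.
Lemma le_NN3 t : nc (P t a3) <= NN t.
Proof. rewrite /NN; have := normc_ge0 (P t a1); have := normc_ge0 (P t a2); have := normc_ge0 (P t a4); lra. Qed.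
Lemma le_NN4 t : nc (P t a4) <= NN t.
Proof. rewrite /NN; have := normc_ge0 (P t a1); have := normc_ge0 (P t a2); have := normc_ge0 (P t a3); lra. Qed.

Lemma sm_a1 : small (fun t => nc (P t a1)). Proof. exact: small_le le_NN1 sm_NN. Qed.
Lemma sm_a2 : small (fun t => nc (P t a2)). Proof. exact: small_le le_NN2 sm_NN. Qed.
Lemma sm_a3 : small (fun t => nc (P t a3)). Proof. exact: small_le le_NN3 sm_NN. Qed.
Lemma sm_a4 : small (fun t => nc (P t a4)). Proof. exact: small_le le_NN4 sm_NN. Qed.
Lemma sm_b1 : small (fun t => nc (P t b1)). Proof. by apply: small_le sm_a1 => t; rewrite eqb1. Qed.
Lemma sm_b2 : small (fun t => nc (P t b2)). Proof. by apply: small_le sm_a2 => t; rewrite eqb2. Qed.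
Lemma sm_b3 : small (fun t => nc (P t b3)). Proof. by apply: small_le sm_a3 => t; rewrite eqb3. Qed.
Lemma sm_b4 : small (fun t => nc (P t b4)). Proof. by apply: small_le sm_a4 => t; rewrite eqb4. Qed.

Lemma ncle (c x : C) : nc c <= 1 -> nc (c * x) <= nc x.
Proof. by move=> h; rewrite normcM -{2}[nc x]mul1r ler_wpM2r ?normc_ge0. Qed.

Lemma nc_k3 : nc (2%:R/3%:R - 1 : C) <= 1.
Proof.
have -> : (2%:R/3%:R - 1 : C) = ((2%:R/3%:R - 1 : R))%:C%C.
  by rewrite rmorphB /= fmorph_div /= !rmorph_nat rmorph1.
rewrite normc_real ler_norml; apply/andP; split; lra.
Qed.
Lemma nc_k2' : nc (2%:R/3%:R : C) <= 1.
Proof. by have := nc_k2 R; rewrite /k2 => ->; lra. Qed.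

Lemma nc3 (x y z : C) : nc (2%:R/3%:R * x + 2%:R/3%:R * y + (2%:R/3%:R - 1) * z) <= nc x + nc y + nc z.
Proof.
apply: le_trans (le_normcD _ _) _; apply: lerD; last exact: ncle nc_k3.
apply: le_trans (le_normcD _ _) _; apply: lerD; exact: ncle nc_k2'.
Qed.

Lemma sm_rout k : small (fun t => nc (P t (rout k))).
Proof.
elim: k => [|k IH].
  apply: (small_unshift (k := 1)).
  apply: small_le (small_add (small_add sm_b3 sm_a3) sm_Rf) => n.
  by rewrite addn1 P_rout0; exact: nc3.
apply: (small_unshift (k := 1)); apply: small_le IH => n.
by rewrite addn1 P_rout.
Qed.

Lemma sm_lout k : small (fun t => nc (P t (lout k))).
Proof.
elim: k => [|k IH].
  apply: (small_unshift (k := 1)).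
  apply: small_le (small_add (small_add sm_a1 sm_b1) sm_Lf) => n.
  by rewrite addn1 P_lout0; exact: nc3.
apply: (small_unshift (k := 1)); apply: small_le IH => n.
by rewrite addn1 P_lout.
Qed.

Lemma sm_probX j : small (fun n => probX Psi0 n j).
Proof.
case: j => [[|k]|k].
- apply: small_le (small_add (small_add (small_add (small_add (small_add
    (small_add (small_add (small_add (small_add (sm_sq sm_b3) (sm_sq sm_a3)) (sm_sq sm_Rf))
    (sm_sq sm_a2)) (sm_sq sm_b4)) (sm_sq sm_a1)) (sm_sq sm_b1)) (sm_sq sm_Lf))
    (sm_sq sm_a4)) (sm_sq sm_b2)) => n.
  by rewrite probX0.
- apply: small_le (small_add (sm_sq (sm_rin k)) (sm_sq (sm_rout k))) => n.
  by rewrite probXP.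
- apply: small_le (small_add (sm_sq (sm_lin k)) (sm_sq (sm_lout k))) => n.
  by rewrite probXN.
Qed.
End Hard.
End PX.

Local Open Scope ring_scope.
Local Open Scope classical_set_scope.

Import ComplexField.Normc.

Section Main.
Variable R : realType.
Local Notation C := R[i].
Variable Psi0 : state R.
Local Notation P t := (Psi_t Psi0 t).
Local Notation sq := (@sqabs R).

Definition DD t := sq (dd (P t) 0) + sq (dd (P t) 1) + sq (dd (P t) 2) + sq (dd (P t) 3).

Lemma DD_const t : DD t = DD 0.
Proof.
elim: t => [//|t IH]; rewrite -IH /DD.
rewrite (@dd_rot R Psi0 t 0%N isT) (@dd_rot R Psi0 t 1%N isT) (@dd_rot R Psi0 t 2%N isT) (@dd_rot R Psi0 t 3%N isT).
rewrite /=; lra.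
Qed.

Lemma probX_lb t : DD t <= 2%:R * probX Psi0 t 0.
Proof.
rewrite probX0 /DD /dd.
have := sq_sub (P t a1) (P t b1); have := sq_sub (P t a2) (P t b2).
have := sq_sub (P t a3) (P t b3); have := sq_sub (P t a4) (P t b4).
have := sqabs_ge0 (P t Rf); have := sqabs_ge0 (P t Lf).
lra.
Qed.

Lemma sq_gt0 (z : C) : z != 0 -> 0 < sq z.
Proof.
move=> hz; rewrite sqabsE exprn_gt0 // lt_def normc_ge0 andbT.
by apply/eqP => /eq0_normc /eqP; rewrite (negbTE hz).
Qed.
End Main.

Theorem theorem1p2 (R : realType) (Psi0 : state R) :
  sqnorm Psi0 = 1%E ->
  (localization Psi0 <-> ~ inGamma_perp Psi0).
Proof.
move=> hn; split.
- move=> [j hj] hp.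
  have h0 := perp_dd0 hp.
  have hdd : forall t j, (j < 4)%N -> dd (Psi_t Psi0 t) j = 0.
    elim=> [|t IH] j' hj'; first exact: h0.
    by rewrite dd_rot // IH // ltn_pmod.
  exact: (small_noloc (sm_probX hn hdd j)).
- move=> hnp.
  have hpos : 0 < DD Psi0 0.
    have hDs : forall t, 0 <= sqabs (dd (Psi_t Psi0 0) t) by move=> t; exact: sqabs_ge0.
    rewrite /DD.
    case: (eqVneq (dd (Psi_t Psi0 0) 0) 0) => h0.
    case: (eqVneq (dd (Psi_t Psi0 0) 1) 0) => h1.
    case: (eqVneq (dd (Psi_t Psi0 0) 2) 0) => h2.
    case: (eqVneq (dd (Psi_t Psi0 0) 3) 0) => h3.
    + exfalso; apply: hnp; apply: dd0_perp => -[|[|[|[|j]]]] //.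
    + have := sq_gt0 h3; have := hDs 0%N; have := hDs 1%N; have := hDs 2%N; lra.
    + have := sq_gt0 h2; have := hDs 0%N; have := hDs 1%N; have := hDs 3%N; lra.
    + have := sq_gt0 h1; have := hDs 0%N; have := hDs 2%N; have := hDs 3%N; lra.
    + have := sq_gt0 h0; have := hDs 1%N; have := hDs 2%N; have := hDs 3%N; lra.
  exists 0; apply: (@loc_of_lb _ _ (DD Psi0 0 / 2%:R)).
    by rewrite divr_gt0.
  move=> n; have := probX_lb Psi0 n; rewrite DD_const; lra.
Qed.

Local Open Scope ring_scope.
Local Open Scope classical_set_scope.
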